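(* Let $W_\omega$ and $W_\eta$ be subnormal unilateral weighted shifts with weight sequences $\omega=(\omega_k)_{k\ge0}$, $\eta=(\eta_k)_{k\ge0}$, and assume that their canonical embedding $W_{(\alpha,\beta)}$ is commuting. Then there exists $r>0$ such that $\eta_k=r\,\omega_k$ for all $k\ge0$.
   Context: For a bounded sequence of positive numbers $\omega$, $W_\omega$ is the unilateral weighted shift $e_n\mapsto\omega_ne_{n+1}$ on $\ell^2(\mathbb{Z}_+)$. The canonical embedding of $(W_\omega,W_\eta)$ is the 2-variable weighted shift $(T_1,T_2)$ on $\ell^2(\mathbb{Z}_+^2)$ given by $T_1e_{(k_1,k_2)}=\omega_{k_1+k_2}e_{(k_1+1,k_2)}$, $T_2e_{(k_1,k_2)}=\eta_{k_1+k_2}e_{(k_1,k_2+1)}$. An operator is subnormal if it is the restriction of a normal operator to an invariant subspace. *)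

(* Defs.v *)
From HB Require Import structures.
From mathcomp Require Import all_boot all_order all_algebra.
From mathcomp Require Import reals.
From mathcomp Require Import complex.
Set Implicit Arguments. Unset Strict Implicit. Unset Printing Implicit Defensive.
Import Order.TTheory GRing.Theory Num.Theory.
Local Open Scope ring_scope.

Section Defs.
Variable R : realType.
Local Notation C := (R[i]).

Definition sqmod (z : C) : R := complex.Re z ^+ 2 + complex.Im z ^+ 2.

Definition seq_lim (u : nat -> R) (l : R) : Prop :=
  forall e : R, 0 < e -> exists N : nat, forall n : nat, (N <= n)%N -> `|u n - l| < e.

Definition l2norm2_is (f : nat -> C) (s : R) : Prop :=
  seq_lim (fun n => \sum_(k < n) sqmod (f k)) s.

Definition in_l2 (f : nat -> C) : Prop := exists s, l2norm2_is f s.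

(* l^2(Z_+^2): square-summable families indexed by pairs (k1,k2)
   (nonnegative terms, so convergence of square partial sums = summability) *)
Definition in_l2_2 (f : nat -> nat -> C) : Prop :=
  exists s, seq_lim (fun n => \sum_(i < n) \sum_(j < n) sqmod (f i j)) s.

(* unilateral weighted shift W_w : e_n |-> w_n e_{n+1} *)
Definition wshift (w : nat -> R) (f : nat -> C) : nat -> C :=
  fun n => match n with 0%N => 0 | m.+1 => (w m)%:C%C * f m end.

(* canonical embedding (T1,T2) of (W_om, W_et):
   T1 e_(k1,k2) = om_(k1+k2) e_(k1+1,k2), T2 e_(k1,k2) = et_(k1+k2) e_(k1,k2+1) *)
Definition cemb1 (om : nat -> R) (f : nat -> nat -> C) : nat -> nat -> C :=
  fun k1 k2 => match k1 with 0%N => 0 | m.+1 => (om (m + k2)%N)%:C%C * f m k2 end.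
Definition cemb2 (et : nat -> R) (f : nat -> nat -> C) : nat -> nat -> C :=
  fun k1 k2 => match k2 with 0%N => 0 | m.+1 => (et (k1 + m)%N)%:C%C * f k1 m end.

Definition canonical_embedding_commuting (om et : nat -> R) : Prop :=
  forall f, in_l2_2 f -> cemb1 om (cemb2 et f) = cemb2 et (cemb1 om f).

Definition hnorm (K : lmodType C) (ip : K -> K -> C) (x : K) : R :=
  Num.sqrt (complex.Re (ip x x)).

Definition is_hilbert (K : lmodType C) (ip : K -> K -> C) : Prop :=
  [/\ (forall x y z, ip (x + y) z = ip x z + ip y z),
      (forall (a : C) x y, ip (a *: x) y = a * ip x y),
      (forall x y, ip y x = conjc (ip x y)),
      (forall x, 0 <= ip x x) /\ (forall x, ip x x = 0 -> x = 0)
    &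
      forall u : nat -> K,
        (forall e : R, 0 < e -> exists N : nat, forall m n : nat,
            (N <= m)%N -> (N <= n)%N -> hnorm ip (u m - u n) < e) ->
        exists l : K, forall e : R, 0 < e -> exists N : nat, forall n : nat,
            (N <= n)%N -> hnorm ip (u n - l) < e].

Definition normal_op (K : lmodType C) (ip : K -> K -> C) (N Ns : K -> K) : Prop :=
  [/\ (forall x y, N (x + y) = N x + N y),
      (forall (a : C) x, N (a *: x) = a *: N x),
      (exists M : R, forall x, hnorm ip (N x) <= M * hnorm ip x),
      (forall x y, ip (N x) y = ip x (Ns y))
    & (forall x, N (Ns x) = Ns (N x))].

(* T on l^2(Z_+) is subnormal: there are a Hilbert space K, a linear isometry
   J : l^2(Z_+) -> K, and a normal operator N on K with N J = J T, i.e. T is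
   (unitarily equivalent to) the restriction of N to the invariant subspace
   J(l^2(Z_+)). *)
Definition subnormal (T : (nat -> C) -> (nat -> C)) : Prop :=
  exists (K : lmodType C) (ip : K -> K -> C), is_hilbert ip /\
  exists (J : (nat -> C) -> K) (N Ns : K -> K),
    [/\ (forall f g, in_l2 f -> in_l2 g -> J (fun k => f k + g k) = J f + J g),
        (forall (a : C) f, in_l2 f -> J (fun k => a * f k) = a *: J f),
        (forall f s, l2norm2_is f s -> complex.Re (ip (J f) (J f)) = s),
        normal_op ip N Ns
      & forall f, in_l2 f -> N (J f) = J (T f)].

End Defs.

(* Main.v *)
Require Import Defs.
From HB Require Import structures.
From mathcomp Require Import all_boot all_order all_algebra.
From mathcomp Require Import reals.
From mathcomp Require Import complex.
Import Order.TTheory GRing.Theory Num.Theory.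
Local Open Scope ring_scope.

Definition delta (R : realType) (b : nat) : nat -> nat -> R[i] :=
  fun i j => if (i == 0%N) && (j == b) then 1 else 0.

Lemma delta_l2 (R : realType) b : in_l2_2 (delta R b).
Proof.
exists 1 => e e0; exists b.+1 => n hn.
have -> : \sum_(i < n) \sum_(j < n) sqmod (delta R b i j) = 1.
  case: n hn => [//|n] hn.
  rewrite big_ord_recl /= [X in _ + X]big1 ?addr0; last first.
    move=> i _; apply: big1 => j _; rewrite /delta /= /sqmod /=; 
      by rewrite expr0n /= addr0.
  rewrite (bigD1 (Ordinal hn)) //= big1 ?addr0.
    by rewrite /delta /= eqxx /sqmod /= expr1n expr0n addr0.
  move=> j hj; rewrite /delta /=.
  have -> : (nat_of_ord j == b) = false.
    by apply/negbTE; apply: contra hj => /eqP hj; apply/eqP/val_inj.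
  by rewrite /sqmod /= expr0n addr0.
by rewrite subrr normr0.
Qed.

Theorem lemma3p11 (R : realType) (om et : nat -> R) :
  (forall k, 0 < om k) -> (forall k, 0 < et k) ->
  (exists M : R, forall k, om k <= M) -> (exists M : R, forall k, et k <= M) ->
  subnormal (wshift om) -> subnormal (wshift et) ->
  canonical_embedding_commuting om et ->
  exists r : R, 0 < r /\ forall k, et k = r * om k.
Proof.
move=> hom het _ _ _ _ hc.
have rec : forall b, om b.+1 * et b = et b.+1 * om b.
  move=> b; have := congr1 (fun F => complex.Re (F 1%N b.+1)) (hc _ (delta_l2 R b)).
  rewrite /cemb1 /cemb2 /delta /= !eqxx /= !mulr1 ?add0n ?addn0 ?addSn ?addnS.
  by rewrite !(mul0r, mulr0, subr0, addr0, add0n).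
exists (et 0%N / om 0%N); split; first by rewrite divr_gt0.
elim=> [|k IH]; first by rewrite divfK // gt_eqF.
apply: (@mulIf _ (om k)); first by rewrite gt_eqF.

by rewrite -rec IH mulrCA mulrA.
Qed.
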